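(* Let $r\ge3$, $n_1,\dots,n_r\ge1$, $p\in \{1,\ldots,\min(n_1,n_2)\}$, $\pi' \in C_2((n_1+n_2-2p)\otimes n_3 \otimes \ldots \otimes n_r)$, $\sigma_1:\{1,\ldots,p\} \to \{1,\ldots,n_1\}$ decreasing and $\sigma_2:\{1,\ldots,p\} \to \{1,\ldots,n_2\}$ injective. Then \[ \mathrm{Cr}(F(\sigma_1,\sigma_2,\pi'))=\alpha_{n_1}(\sigma_1)+\beta(\sigma_2)+\mathrm{Cr}(\pi'). \]
   Context: For a pairing $\pi$ (partition into two-element sets) of a finite set of integers, a crossing is a pair of blocks $\{x_1,y_1\},\{x_2,y_2\}\in\pi$ with $x_1<x_2<y_1<y_2$; $\mathrm{Cr}(\pi)$ is their number. Blocks and respecting pairings: for $n_1,\dots,n_r\ge1$ and $N=n_1+\dots+n_r$, the blocks of $n_1\otimes\cdots\otimes n_r$ are $\{1,\dots,n_1\}$, $\{n_1+1,\dots,n_1+n_2\}$, etc.; $C_2(n_1\otimes\cdots\otimes n_r)$ is the set of pairings of $\{1,\dots,N\}$ each of whose pairs joins two different blocks. For an injective $\sigma:\{1,\dots,p\}\to\{1,\dots,m\}$, $\mathrm{inv}(\sigma)=\mathrm{Card}\{i<j:\sigma(i)>\sigma(j)\}$, $\alpha_n(\sigma):=\sum_{i=1}^p (n+1-\sigma(i))-\frac{p(p+1)}{2}$ and $\beta(\sigma):=\sum_{i=1}^p \sigma(i)-\frac{p(p+1)}{2}+\mathrm{inv}(\sigma)$. Construction $F$: $\pi=F(\sigma_1,\sigma_2,\pi')\in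 C_2(n_1\otimes\cdots\otimes n_r)$ consists of the $p$ pairs $\{\sigma_1(i),n_1+\sigma_2(i)\}$, $1\le i\le p$, together with the pairs obtained from $\pi'$ by identifying the first block $\{1,\dots,n_1+n_2-2p\}$ of $\pi'$ (in increasing order) with the $n_1+n_2-2p$ points of $\{1,\dots,n_1+n_2\}$ not used in those $p$ pairs (in increasing order), and the point $n_1+n_2-2p+j$ of $\pi'$ with $n_1+n_2+j$ for $j\ge1$. *)

(* Defs.v *)
From mathcomp Require Import all_boot.
Set Implicit Arguments. Unset Strict Implicit. Unset Printing Implicit Defensive.

(* A pair/block {x,y} of a pairing is stored as (x,y) with x < y;
   a pairing is a finite list of such blocks. *)
Definition pairing := seq (nat * nat).

Definition is_pairing (N : nat) (pi : pairing) : bool :=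
  all (fun b => b.1 < b.2) pi &&
  perm_eq (flatten [seq [:: b.1; b.2] | b <- pi]) (iota 1 N).

Definition Cr (pi : pairing) : nat :=
  \sum_(b1 <- pi) \sum_(b2 <- pi)
     [&& b1.1 < b2.1, b2.1 < b1.2 & b1.2 < b2.2].

(* Index (0-based) of the block of n_1 (x) ... (x) n_r containing k. *)
Definition blk (ns : seq nat) (k : nat) : nat :=
  count (fun s => s < k) [seq sumn (take j ns) | j <- iota 1 (size ns)].

Definition C2 (ns : seq nat) (pi : pairing) : bool :=
  is_pairing (sumn ns) pi && all (fun b => blk ns b.1 != blk ns b.2) pi.

(* Maps sigma : {1..p} -> {1..m} are functions nat -> nat; only the
   values on {1..p} matter. *)
Definition maps_into (p m : nat) (s : nat -> nat) : Prop :=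
  forall i, 1 <= i <= p -> 1 <= s i <= m.

Definition injective_on (p : nat) (s : nat -> nat) : Prop :=
  forall i j, 1 <= i <= p -> 1 <= j <= p -> s i = s j -> i = j.

Definition decreasing_on (p : nat) (s : nat -> nat) : Prop :=
  forall i j, 1 <= i -> i < j -> j <= p -> s j < s i.

Definition inv (p : nat) (s : nat -> nat) : nat :=
  \sum_(1 <= i < p.+1) \sum_(1 <= j < p.+1) (i < j) && (s j < s i).

Definition alpha (n p : nat) (s : nat -> nat) : nat :=
  \sum_(1 <= i < p.+1) (n.+1 - s i) - (p * p.+1) %/ 2.

Definition beta (p : nat) (s : nat -> nat) : nat :=
  \sum_(1 <= i < p.+1) s i - (p * p.+1) %/ 2 + inv p s.

Definition F (n1 n2 p : nat) (s1 s2 : nat -> nat) (pi' : pairing) : pairing :=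
  let used := [seq s1 i | i <- iota 1 p] ++ [seq n1 + s2 i | i <- iota 1 p] in
  let U := [seq k <- iota 1 (n1 + n2) | k \notin used] in
  let M := n1 + n2 - 2 * p in
  let g := fun k => if k <= M then nth 0 U k.-1 else n1 + n2 + (k - M) in
  [seq (s1 i, n1 + s2 i) | i <- iota 1 p] ++ [seq (g b.1, g b.2) | b <- pi'].

(* Main.v *)
Require Import Defs.
From mathcomp Require Import all_boot zify.

Lemma count_lt_iota a m n : count (fun j => j < a) (iota m n) = minn n (a - m).
Proof. elim: n m => [|n IH] m /=; first by rewrite min0n.
rewrite IH; case: ltnP => H /=; lia. Qed.

Lemma count_int_iota a b m n :
  count (fun u => (a < u) && (u < b)) (iota m n) = minn (m + n) b - maxn m a.+1.
Proof. elim: n m => [|n IH] m /=; first by rewrite addn0; lia.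
rewrite IH; case: (ltnP a m) => H1; case: (ltnP m b) => H2 /=; lia. Qed.

Lemma count_split_int a b c s : a <= b -> b < c ->
  count (fun u => (a < u) && (u < c)) s =
  count (fun u => (a < u) && (u < b.+1)) s + count (fun u => (b < u) && (u < c)) s.
Proof. move=> H1 H2; elim: s => [|x s IH] //=; rewrite IH.
case: (ltnP a x) => H3; case: (ltnP x c) => H4; case: (ltnP x b.+1) => H5; case: (ltnP b x) => H6 /=; lia. Qed.

Lemma sum_bool_count (T : Type) (s : seq T) (P : pred T) : \sum_(x <- s) (P x : nat) = count P s.
Proof. elim: s => [|x s IH]; by rewrite ?big_nil ?big_cons ?IH. Qed.

Lemma count_in_uniq (used t : seq nat) (P : pred nat) : uniq used -> {subset used <= t} -> uniq t ->
  count (fun k => (k \in used) && P k) t = count P used.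
Proof. move=> Uu Sub Ut.
have -> : count (fun k => (k \in used) && P k) t = count P [seq k <- t | k \in used].
  by rewrite count_filter; apply: eq_count => k /=; rewrite andbC.
apply/permP; apply: uniq_perm; first by rewrite filter_uniq.
  done.
by move=> k; rewrite mem_filter; case H: (k \in used) => //=; rewrite Sub.
Qed.

Lemma count_split_pred (T : Type) (a P : pred T) s : count P s = count (fun k => a k && P k) s + count (fun k => ~~ a k && P k) s.
Proof. elim: s => //= x s ->; case: (a x); case: (P x) => /=; lia. Qed.

Lemma sum_iota_id p : \sum_(i <- iota 1 p) i = (p * p.+1) %/ 2.
Proof. have H : 2 * \sum_(i <- iota 1 p) i = p * p.+1.
  elim: p => [|p IH]; first by rewrite big_nil.
  rewrite -[p.+1]addn1.
  rewrite -addn1 iotaD big_cat /= /= big_cons big_nil mulnDr IH; lia.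
rewrite -H mulKn //. Qed.

Definition crs (b1 b2 : nat * nat) : nat := [&& b1.1 < b2.1, b2.1 < b1.2 & b1.2 < b2.2].

Lemma Cr_cat A B : Cr (A ++ B) = Cr A + Cr B + \sum_(b <- A) \sum_(q <- B) (crs b q + crs q b).
Proof.
rewrite /Cr big_cat /=.
under eq_bigr do rewrite big_cat /=.
under [X in _ + X]eq_bigr do rewrite big_cat /=.
rewrite !big_split /=.
rewrite [\sum_(i <- B) \sum_(j <- A) _]exchange_big /=.
under [X in _ = _ + X]eq_bigr do rewrite big_split /=.
rewrite big_split /= /crs; lia.
Qed.

Lemma dec_lt p s i j : decreasing_on p s -> 1 <= i <= p -> 1 <= j <= p -> (s i < s j) = (j < i).
Proof. move=> D /andP[i1 ip] /andP[j1 jp]. case: (ltngtP j i) => H.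
- by apply/idP; apply: D.
- by apply/negbTE; rewrite -leqNgt ltnW //; apply: D.
- by rewrite H ltnn.
Qed.

Lemma crossP n1 p s1 s2 : maps_into p n1 s1 -> decreasing_on p s1 -> (forall i, 1 <= i <= p -> 1 <= s2 i) ->
  Cr [seq (s1 i, n1 + s2 i) | i <- iota 1 p] = Defs.inv p s2.
Proof.
move=> M1 D M2.
rewrite /Cr /Defs.inv big_map /index_iota subSS subn0.
rewrite exchange_big /= big_map.
apply: eq_big_seq => j; rewrite mem_iota => Hj.
apply: eq_big_seq => i; rewrite mem_iota => Hi /=.
have Hi' : 1 <= i <= p by lia.
have Hj' : 1 <= j <= p by lia.
rewrite (@dec_lt p s1 i j D Hi' Hj') ltn_add2l.
have := M1 j Hj'; have := M2 i Hi' => ? ?.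
have -> : s1 j < n1 + s2 i by lia.
by [].
Qed.
Set Implicit Arguments. Unset Strict Implicit.

Definition usedL n1 p (s1 s2 : nat -> nat) :=
  [seq s1 i | i <- iota 1 p] ++ [seq n1 + s2 i | i <- iota 1 p].
Definition UL n1 n2 p s1 s2 := [seq k <- iota 1 (n1 + n2) | k \notin usedL n1 p s1 s2].
Definition gL n1 n2 p s1 s2 k :=
  if k <= n1 + n2 - 2 * p then nth 0 (UL n1 n2 p s1 s2) k.-1 else n1 + n2 + (k - (n1 + n2 - 2 * p)).

Lemma F_eq n1 n2 p s1 s2 pi' : F n1 n2 p s1 s2 pi' =
  [seq (s1 i, n1 + s2 i) | i <- iota 1 p] ++
  [seq (gL n1 n2 p s1 s2 b.1, gL n1 n2 p s1 s2 b.2) | b <- pi'].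
Proof. by []. Qed.

Lemma used_uniq n1 n2 p s1 s2 : maps_into p n1 s1 -> decreasing_on p s1 ->
  maps_into p n2 s2 -> injective_on p s2 -> uniq (usedL n1 p s1 s2).
Proof.
move=> M1 D M2 I2; rewrite /usedL cat_uniq; apply/and3P; split.
- rewrite map_inj_in_uniq ?iota_uniq // => i j; rewrite !mem_iota => Hi Hj E.
  have Hi' : 1 <= i <= p by lia. have Hj' : 1 <= j <= p by lia.
  case: (ltngtP i j) => // H.
  + by move: (D i j (proj1 (andP Hi')) H (proj2 (andP Hj'))); rewrite E ltnn.
  + by move: (D j i (proj1 (andP Hj')) H (proj2 (andP Hi'))); rewrite E ltnn.
- apply/hasPn => x /mapP [j]; rewrite mem_iota => Hj -> {x}.
  apply/mapP => [[i]]; rewrite mem_iota => Hi E.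
  have := M1 i ltac:(lia); have := M2 j ltac:(lia); lia.
- rewrite map_inj_in_uniq ?iota_uniq // => i j; rewrite !mem_iota => Hi Hj E.
  apply: I2; lia.
Qed.

Lemma used_sub n1 n2 p s1 s2 : maps_into p n1 s1 -> maps_into p n2 s2 ->
  {subset usedL n1 p s1 s2 <= iota 1 (n1 + n2)}.
Proof.
move=> M1 M2 x; rewrite mem_cat mem_iota => /orP [] /mapP [i]; rewrite mem_iota => Hi ->.
- have := M1 i ltac:(lia); lia.
- have := M2 i ltac:(lia); lia.
Qed.

Lemma count_U n1 n2 p s1 s2 (P : pred nat) : maps_into p n1 s1 -> decreasing_on p s1 ->
  maps_into p n2 s2 -> injective_on p s2 ->
  count P (UL n1 n2 p s1 s2) + count P (usedL n1 p s1 s2) = count P (iota 1 (n1 + n2)).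
Proof.
move=> M1 D M2 I2.
rewrite [RHS](@count_split_pred nat (fun k => k \in usedL n1 p s1 s2) P) /UL count_filter.
rewrite (@count_in_uniq (usedL n1 p s1 s2) (iota 1 (n1 + n2)) P) ?iota_uniq //.
- rewrite addnC; congr (_ + _); apply: eq_count => k /=; by rewrite andbC.
- exact: used_uniq M1 D M2 I2.
- exact: used_sub M1 M2.
Qed.

Lemma size_U n1 n2 p s1 s2 : maps_into p n1 s1 -> decreasing_on p s1 ->
  maps_into p n2 s2 -> injective_on p s2 -> size (UL n1 n2 p s1 s2) = n1 + n2 - 2 * p.
Proof.
move=> M1 D M2 I2; have := @count_U n1 n2 p s1 s2 predT M1 D M2 I2.
rewrite !count_predT size_iota /usedL size_cat !size_map size_iota => <-; by rewrite mul2n -addnn addnK.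
Qed.

Lemma U_bound n1 n2 p s1 s2 u : u \in UL n1 n2 p s1 s2 -> 1 <= u <= n1 + n2.
Proof. rewrite mem_filter mem_iota => /andP [_ H]; lia. Qed.

Lemma g_mono n1 n2 p s1 s2 x y : maps_into p n1 s1 -> decreasing_on p s1 ->
  maps_into p n2 s2 -> injective_on p s2 -> 1 <= x -> x < y ->
  gL n1 n2 p s1 s2 x < gL n1 n2 p s1 s2 y.
Proof.
move=> M1 D M2 I2 Hx Hxy; have SU := size_U M1 D M2 I2.
rewrite /gL; case: ifP => Hxm; case: ifP => Hym.
- apply: (sorted_ltn_nth ltn_trans); first by apply: sorted_filter; [exact: ltn_trans| exact: iota_ltn_sorted].
  + rewrite inE SU; lia.
  + rewrite inE SU; lia.
  + lia.
- have : nth 0 (UL n1 n2 p s1 s2) x.-1 \in UL n1 n2 p s1 s2 by apply: mem_nth; rewrite SU; lia.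
  move/U_bound; lia.
- lia.
- lia.
Qed.

Lemma g_lt n1 n2 p s1 s2 x y : maps_into p n1 s1 -> decreasing_on p s1 ->
  maps_into p n2 s2 -> injective_on p s2 -> 1 <= x -> 1 <= y ->
  (gL n1 n2 p s1 s2 x < gL n1 n2 p s1 s2 y) = (x < y).
Proof.
move=> M1 D M2 I2 Hx Hy; case: (ltngtP x y) => H.
- by apply/idP; apply: g_mono.
- by apply/negbTE; rewrite -leqNgt ltnW //; apply: g_mono.
- by rewrite H ltnn.
Qed.

Lemma map_g n1 n2 p s1 s2 : maps_into p n1 s1 -> decreasing_on p s1 ->
  maps_into p n2 s2 -> injective_on p s2 ->
  map (gL n1 n2 p s1 s2) (iota 1 (n1 + n2 - 2 * p)) = UL n1 n2 p s1 s2.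
Proof.
move=> M1 D M2 I2; have SU := size_U M1 D M2 I2.
have -> : map (gL n1 n2 p s1 s2) (iota 1 (n1 + n2 - 2 * p)) =
  map (fun k => nth 0 (UL n1 n2 p s1 s2) k.-1) (iota 1 (n1 + n2 - 2 * p)).
  by apply/eq_in_map => k; rewrite mem_iota /gL => H; rewrite ifT //; lia.
rewrite -[1]addn0 iotaDl -map_comp /=.
rewrite -SU -[RHS](mkseq_nth 0) /mkseq; by apply: eq_map => i /=.
Qed.
Set Implicit Arguments. Unset Strict Implicit.

Lemma blk0 M rest k : k <= M -> blk (M :: rest) k = 0.
Proof.
move=> Hk; rewrite /blk; apply/eqP; rewrite -leqn0 leqNgt -has_count.
apply/hasPn => s /mapP [j]; rewrite mem_iota => Hj ->.
case: j Hj => [|j] Hj //=; lia.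
Qed.

Lemma cross_q n1 n2 p s1 s2 (pi' : pairing) rest a c :
  maps_into p n1 s1 -> decreasing_on p s1 ->
  maps_into p n2 s2 -> injective_on p s2 ->
  C2 ((n1 + n2 - 2 * p) :: rest) pi' -> c <= n1 + n2 ->
  \sum_(q <- pi') (crs (a, c) (gL n1 n2 p s1 s2 q.1, gL n1 n2 p s1 s2 q.2)
                 + crs (gL n1 n2 p s1 s2 q.1, gL n1 n2 p s1 s2 q.2) (a, c))
  = count (fun u => (a < u) && (u < c)) (UL n1 n2 p s1 s2).
Proof.
move=> M1 D M2 I2 /andP [/andP [Hlt Hperm] Hbl] Hc.
set M := n1 + n2 - 2 * p.
set g := gL n1 n2 p s1 s2.
pose w k : nat := [&& k <= M, a < g k & g k < c].
have gbig : forall k, M < k -> n1 + n2 < g k.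
  by move=> k Hk; rewrite /g /gL -/M ifN; lia.
have gsmall : forall k, 1 <= k <= M -> g k <= n1 + n2.
  move=> k Hk; rewrite /g /gL -/M ifT; last by lia.
  have : nth 0 (UL n1 n2 p s1 s2) k.-1 \in UL n1 n2 p s1 s2.
    by apply: mem_nth; rewrite (size_U M1 D M2 I2); lia.
  by move/U_bound; lia.
have E1 : \sum_(q <- pi') (crs (a, c) (g q.1, g q.2) + crs (g q.1, g q.2) (a, c))
        = \sum_(q <- pi') (w q.1 + w q.2).
  apply: eq_big_seq => q Hq.
  have lt12 : q.1 < q.2 by move/allP: Hlt => /(_ q Hq).
  have q1pos : 1 <= q.1.
    have : q.1 \in iota 1 (sumn ((n1 + n2 - 2 * p) :: rest)).
      rewrite -(perm_mem Hperm); apply/flatten_mapP; exists q => //; by rewrite inE eqxx.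
    rewrite mem_iota; lia.
  have nb : ~~ (q.2 <= M).
    apply/negP => H; move/allP: Hbl => /(_ q Hq).
    rewrite (blk0 rest (_ : q.1 <= M)) ?(blk0 rest H) //; lia.
  have := gbig q.2 ltac:(lia).
  rewrite /crs /w /=.
  case: (leqP q.1 M) => H1.
  - have := gsmall q.1 ltac:(lia).
    move=> ? ?.
    rewrite (negbTE nb) /=.
    case: (ltnP a (g q.1)); case: (ltnP (g q.1) c); case: (ltnP (g q.1) a); case: (ltnP a (g q.2)); case: (ltnP c (g q.2)); case: (ltnP (g q.2) c) => /=; lia.
  - have G1 := gbig q.1 H1 => G2.
    rewrite (negbTE nb) /=.
    have -> : (g q.1 < c) = false by apply/negbTE; rewrite -leqNgt; exact: leq_trans Hc (ltnW G1).
    have -> : (g q.2 < c) = false by apply/negbTE; rewrite -leqNgt; exact: leq_trans Hc (ltnW G2).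
    by rewrite !andbF.
rewrite E1.
have E2 : \sum_(q <- pi') (w q.1 + w q.2) = \sum_(k <- flatten [seq [:: b.1; b.2] | b <- pi']) w k.
  by rewrite big_flatten /= big_map; apply: eq_bigr => q _; rewrite !big_cons big_nil addn0.
rewrite E2 (perm_big _ Hperm) /= iotaD big_cat /=.
rewrite [X in _ + X]big1_seq ?addn0; last first.
  move=> k /andP [_]; rewrite mem_iota => H; rewrite /w (_ : (k <= M) = false) //; apply/negbTE; rewrite -ltnNge; lia.
rewrite -sum_bool_count -(map_g M1 D M2 I2) big_map.
apply: eq_big_seq => k; rewrite mem_iota => Hk; rewrite /w.
rewrite (_ : k <= M) //; rewrite /M; lia.
Qed.
Set Implicit Arguments. Unset Strict Implicit.

Lemma count1 n1 n2 p s1 s2 i : maps_into p n1 s1 -> decreasing_on p s1 ->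
  maps_into p n2 s2 -> injective_on p s2 -> 1 <= i <= p ->
  count (fun u => (s1 i < u) && (u < n1.+1)) (UL n1 n2 p s1 s2) + i = n1.+1 - s1 i.
Proof.
move=> M1 D M2 I2 Hi.
have := count_U (fun u => (s1 i < u) && (u < n1.+1)) M1 D M2 I2.
rewrite count_int_iota /usedL count_cat !count_map.
have -> : count (preim (fun i0 => n1 + s2 i0) (fun u => (s1 i < u) && (u < n1.+1))) (iota 1 p) = 0.
  apply/eqP; rewrite -leqn0 leqNgt -has_count; apply/hasPn => j; rewrite mem_iota => Hj /=.
  have := M2 j ltac:(lia); lia.
have -> : count (preim s1 (fun u => (s1 i < u) && (u < n1.+1))) (iota 1 p) = count (fun j => j < i) (iota 1 p).
  apply: eq_in_count => j; rewrite mem_iota => Hj /=.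
  rewrite (@dec_lt p s1 i j D Hi ltac:(lia)).
  have := M1 j ltac:(lia) => ?; rewrite (_ : s1 j < n1.+1) ?andbT //; lia.
rewrite count_lt_iota.
have := M1 i Hi; lia.
Qed.

Lemma count2 n1 n2 p s1 s2 i : maps_into p n1 s1 -> decreasing_on p s1 ->
  maps_into p n2 s2 -> injective_on p s2 -> 1 <= i <= p ->
  count (fun u => (n1 < u) && (u < n1 + s2 i)) (UL n1 n2 p s1 s2) + 1
   + count (fun j => s2 j < s2 i) (iota 1 p) = s2 i.
Proof.
move=> M1 D M2 I2 Hi.
have := count_U (fun u => (n1 < u) && (u < n1 + s2 i)) M1 D M2 I2.
rewrite count_int_iota /usedL count_cat !count_map.
have -> : count (preim s1 (fun u => (n1 < u) && (u < n1 + s2 i))) (iota 1 p) = 0.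
  apply/eqP; rewrite -leqn0 leqNgt -has_count; apply/hasPn => j; rewrite mem_iota => Hj /=.
  have := M1 j ltac:(lia); lia.
have -> : count (preim (fun i0 => n1 + s2 i0) (fun u => (n1 < u) && (u < n1 + s2 i))) (iota 1 p) = count (fun j => s2 j < s2 i) (iota 1 p).
  apply: eq_in_count => j; rewrite mem_iota => Hj /=.
  have := M2 j ltac:(lia) => ?; rewrite ltn_add2l (_ : n1 < n1 + s2 j) //; lia.
have := M2 i Hi; lia.
Qed.

Lemma sum_const_s (T : Type) (s : seq T) c : \sum_(i <- s) c = size s * c.
Proof. elim: s => [|x s IH]; by rewrite ?big_nil ?big_cons ?IH ?mulSn. Qed.

Lemma pairs_sum p s2 : injective_on p s2 ->
  p + \sum_(i <- iota 1 p) count (fun j => s2 j < s2 i) (iota 1 p) = (p * p.+1) %/ 2.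
Proof.
move=> I2.
set D := \sum_(i <- iota 1 p) _.
have ED : D = \sum_(i <- iota 1 p) \sum_(j <- iota 1 p) (s2 j < s2 i : nat).
  by apply: eq_bigr => i _; rewrite sum_bool_count.
have ED' : D = \sum_(i <- iota 1 p) \sum_(j <- iota 1 p) (s2 i < s2 j : nat).
  by rewrite ED exchange_big.
have Eq : \sum_(i <- iota 1 p) \sum_(j <- iota 1 p) (j == i : nat) = p.
  rewrite -[RHS](size_iota 1 p) -sum1_size; apply: eq_big_seq => i Hi.
  by rewrite sum_bool_count (count_uniq_mem _ (iota_uniq 1 p)) Hi.
have Ep : \sum_(i <- iota 1 p) \sum_(j <- iota 1 p)
    ((s2 j < s2 i : nat) + (s2 i < s2 j : nat) + (j == i : nat)) = p * p.
  transitivity (\sum_(i <- iota 1 p) p); last by rewrite sum_const_s size_iota.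
  apply: eq_big_seq => i Hi.
  transitivity (\sum_(j <- iota 1 p) 1); last by rewrite sum1_size size_iota.
  apply: eq_big_seq => j Hj; move: Hi Hj; rewrite !mem_iota => Hi Hj.
  case: (ltngtP (s2 j) (s2 i)) => H /=.
  - by rewrite (_ : (j == i) = false) //; apply/negbTE; apply/eqP => E; move: H; rewrite E ltnn.
  - by rewrite (_ : (j == i) = false) //; apply/negbTE; apply/eqP => E; move: H; rewrite E ltnn.
  - by rewrite (I2 j i ltac:(lia) ltac:(lia) H) eqxx.
move: Ep; under eq_bigr do rewrite !big_split /=.
rewrite !big_split /= -ED -ED' Eq => Ep.
rewrite (_ : p * p.+1 = 2 * (p + D)) ?mulKn //.
rewrite mulnS; lia.
Qed.

Theorem lemma2p6 (r : nat) (ns : seq nat) (p : nat) (pi' : pairing)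
  (s1 s2 : nat -> nat) :
  size ns = r -> 3 <= r -> all (fun n => 0 < n) ns ->
  let n1 := nth 0 ns 0 in
  let n2 := nth 0 ns 1 in
  1 <= p <= minn n1 n2 ->
  C2 ((n1 + n2 - 2 * p) :: drop 2 ns) pi' ->
  maps_into p n1 s1 -> decreasing_on p s1 ->
  maps_into p n2 s2 -> injective_on p s2 ->
  Cr (F n1 n2 p s1 s2 pi') = alpha n1 p s1 + beta p s2 + Cr pi'.
Proof.
move=> _ _ _ n1 n2 Hp HC M1 D M2 I2.
have HC' := HC.
move: HC' => /andP [/andP [Hlt Hperm] _].
rewrite F_eq Cr_cat.
rewrite (@crossP n1 p s1 s2 M1 D); last by move=> i Hi; have := M2 i Hi; lia.
have pos : forall b, b \in pi' -> 1 <= b.1 /\ 1 <= b.2.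
  move=> b Hb; split.
  - have : b.1 \in iota 1 (sumn ((n1 + n2 - 2 * p) :: drop 2 ns)).
      rewrite -(perm_mem Hperm); apply/flatten_mapP; exists b => //; by rewrite inE eqxx.
    rewrite mem_iota; lia.
  - have : b.2 \in iota 1 (sumn ((n1 + n2 - 2 * p) :: drop 2 ns)).
      rewrite -(perm_mem Hperm); apply/flatten_mapP; exists b => //; by rewrite !inE eqxx orbT.
    rewrite mem_iota; lia.
have -> : Cr [seq (gL n1 n2 p s1 s2 b.1, gL n1 n2 p s1 s2 b.2) | b <- pi'] = Cr pi'.
  rewrite /Cr big_map; apply: eq_big_seq => b1 H1; rewrite big_map; apply: eq_big_seq => b2 H2 /=.
  have [? ?] := pos b1 H1; have [? ?] := pos b2 H2.
  by rewrite !(g_lt M1 D M2 I2).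
rewrite big_map.
have -> : \sum_(i <- iota 1 p) \sum_(q <- [seq (gL n1 n2 p s1 s2 b.1, gL n1 n2 p s1 s2 b.2) | b <- pi'])
     (crs (s1 i, n1 + s2 i) q + crs q (s1 i, n1 + s2 i))
   = \sum_(i <- iota 1 p) count (fun u => (s1 i < u) && (u < n1.+1)) (UL n1 n2 p s1 s2)
     + \sum_(i <- iota 1 p) count (fun u => (n1 < u) && (u < n1 + s2 i)) (UL n1 n2 p s1 s2).
  rewrite -big_split; apply: eq_big_seq => i; rewrite mem_iota => Hi.
  rewrite big_map (cross_q _ M1 D M2 I2 HC); last by have := M2 i ltac:(lia); lia.
  apply: count_split_int; have := M1 i ltac:(lia); have := M2 i ltac:(lia); lia.
have H1 : \sum_(i <- iota 1 p) count (fun u => (s1 i < u) && (u < n1.+1)) (UL n1 n2 p s1 s2)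
          + (p * p.+1) %/ 2 = \sum_(i <- iota 1 p) (n1.+1 - s1 i).
  rewrite -sum_iota_id -big_split; apply: eq_big_seq => i; rewrite mem_iota => Hi.
  apply: count1 => //; lia.
have H2 : \sum_(i <- iota 1 p) count (fun u => (n1 < u) && (u < n1 + s2 i)) (UL n1 n2 p s1 s2)
          + (p * p.+1) %/ 2 = \sum_(i <- iota 1 p) s2 i.
  rewrite -(pairs_sum I2).
  transitivity (\sum_(i <- iota 1 p) (count (fun u => (n1 < u) && (u < n1 + s2 i)) (UL n1 n2 p s1 s2) + 1
     + count (fun j => s2 j < s2 i) (iota 1 p))).
    by rewrite !big_split /= sum1_size size_iota addnA.
  apply: eq_big_seq => i; rewrite mem_iota => Hi; apply: count2 => //; lia.
rewrite /alpha /beta /index_iota subSS subn0.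
lia.
Qed.
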